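(* Consider the Brinkmann spacetime $\mathrm{d}s^{2} = -2\,\mathrm{d}u\,\mathrm{d}v + \mathrm{d}x^{2} + \mathrm{d}y^{2} + h(u,x,y)\,\mathrm{d}u^{2}$ coupled to a monochromatic, arbitrarily polarized, weakly transversely modulated electromagnetic wave in the Maxwell-consistent completion: the carrier is $$a_x(u)=\tfrac{\sqrt2E_0}{\omega}\big(\cos\chi\cos\theta\cos\psi-\sigma\sin\chi\sin\theta\sin\psi\big),\quad a_y(u)=\tfrac{\sqrt2E_0}{\omega}\big(\cos\chi\cos\theta\sin\psi+\sigma\sin\chi\sin\theta\cos\psi\big),$$ with $\theta(u)=\frac{\omega}{c}u+\phi_0$, and the potential is $A_u=\gamma\,\mathbf a'(u)\cdot\nabla w$, $A_i=a_i(u)+\gamma\,\partial_i[\mathbf a(u)\cdot\nabla w+\psi_{\rm H}]$, $A_v=0$, where $\Delta_\perp w=f$ for an arbitrary smooth profile $f(x,y)$, $0<|\gamma|\ll 1$, and the harmonic complement $\psi_{\rm H}$ ($\Delta_\perp\psi_{\rm H}=0$) is removed (bounded/decaying on $\mathbb R^2$, hence constant in $(x,y)$). Let $h$ be the particular solution of the Einstein equation $\Delta_\perp h=-\frac{16\pi G}{c^4}T_{uu}$, $T_{uu}=\frac1{\mu_0}(F_{ux}^2+F_{uy}^2)$, with no additional vacuum modes (solutions of $\Delta_\perp h_{\rm vac}=0$) and no $u$-only terms, namely $h=-\mathcal C\,\mathrm{tr}\,\mathbf D(u)\,r^2+\mathcal O(\gamma^2)$. Then the cycle-averaged curvature satisfies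 $$R^{\langle\cdot\rangle}_{uiuj}(x,y):=\big\langle R_{uiuj}\big\rangle_u=\mathcal C\,\delta_{ij}+\mathcal O(\gamma^2),$$ independent of the polarization parameters $(\psi,\chi,\sigma)$ and of the transverse modulation $f$ at $\mathcal O(\gamma)$.
   Context: Coordinates $(u,v,x,y)$, $i,j\in\{x,y\}$, $r^2=x^2+y^2$, $\Delta_\perp=\partial_x^2+\partial_y^2$, $\nabla=(\partial_x,\partial_y)^\top$, $\mathbf a=(a_x,a_y)^\top$, prime $=\mathrm d/\mathrm du$. The polarization is parametrized by orientation angle $\psi$, ellipticity angle $\chi\in[-\pi/4,\pi/4]$ ($\chi=0$ linear, $|\chi|=\pi/4$ circular), and handedness $\sigma=\pm1$; $E_0>0$ is the amplitude, $\omega$ the angular frequency conjugate to $u$, $\phi_0$ a phase. $\mathbf D(u)=\widehat{\mathbf a}'(u)\widehat{\mathbf a}'(u)^\top$ with $\widehat{\mathbf a}'=\frac{c}{E_0}\mathbf a'$, so $\mathrm{tr}\,\mathbf D(u)=1-\cos2\chi\cos(2\theta)$. $\mathcal C=\frac{4\pi GE_0^2}{c^6\mu_0}$, with $G$ Newton's constant, $c$ the speed of light, $\mu_0$ the vacuum permeability. The only independent Riemann components are $R_{uiuj}=-\frac12\partial_i\partial_j h$. $\langle\cdot\rangle_u$ denotes the average over one period in $u$ (equivalently over the phase $\theta$). *)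

(* Defs.v *)
From Stdlib Require Import Reals Lra.
From Coquelicot Require Import Coquelicot.
Open Scope R_scope.

Inductive tidx := Ix | Iy.

Definition kdelta (i j : tidx) : R :=
  match i, j with Ix, Ix => 1 | Iy, Iy => 1 | _, _ => 0 end.

Definition theta (omega c phi0 u : R) : R := omega / c * u + phi0.

Definition a_x (E0 omega c phi0 psi chi sigma u : R) : R :=
  sqrt 2 * E0 / omega *
  (cos chi * cos (theta omega c phi0 u) * cos psi
   - sigma * sin chi * sin (theta omega c phi0 u) * sin psi).
Definition a_y (E0 omega c phi0 psi chi sigma u : R) : R :=
  sqrt 2 * E0 / omega *
  (cos chi * cos (theta omega c phi0 u) * sin psi
   + sigma * sin chi * sin (theta omega c phi0 u) * cos psi).

(* D(u) = ahat'(u) ahat'(u)^T with ahat' = (c/E0) a'; its trace *)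
Definition trD (E0 omega c phi0 psi chi sigma u : R) : R :=
  (c / E0) ^ 2 *
  ((Derive (a_x E0 omega c phi0 psi chi sigma) u) ^ 2
   + (Derive (a_y E0 omega c phi0 psi chi sigma) u) ^ 2).

Definition Ccal (G E0 c mu0 : R) : R := 4 * PI * G * E0 ^ 2 / (c ^ 6 * mu0).

Definition dT (i : tidx) (F : R -> R -> R -> R) : R -> R -> R -> R :=
  fun u x y => match i with
  | Ix => Derive (fun x' => F u x' y) x
  | Iy => Derive (fun y' => F u x y') y
  end.

Definition exdT (i : tidx) (F : R -> R -> R -> R) (u x y : R) : Prop :=
  match i with
  | Ix => ex_derive (fun x' => F u x' y) x
  | Iy => ex_derive (fun y' => F u x y') y
  end.

(* Riemann components of the Brinkmann metric: R_{uiuj} = -1/2 d_i d_j h *)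
Definition Riem (h : R -> R -> R -> R) (i j : tidx) : R -> R -> R -> R :=
  fun u x y => - / 2 * dT i (dT j h) u x y.

Definition cyc_avg (T u0 : R) (F : R -> R) : R := / T * RInt F u0 (u0 + T).

(* A family e_gamma(u,x,y) is O(gamma^2) at the level of transverse second
   derivatives: it is twice differentiable in (x,y), and at each (x,y) its
   transverse Hessian is bounded by K gamma^2 uniformly in u, for small
   nonzero gamma. *)
Definition hess_O_gamma2 (e : R -> R -> R -> R -> R) : Prop :=
  (forall gam i j u x y, exdT j (e gam) u x y /\ exdT i (dT j (e gam)) u x y) /\
  (forall x y, exists K gam0, 0 < gam0 /\
     forall gam, 0 < Rabs gam < gam0 -> forall i j u,
       Rabs (dT i (dT j (e gam)) u x y) <= K * gam ^ 2).

(* Main.v *)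
Require Import Defs.
From Stdlib Require Import Reals Lra FunctionalExtensionality.
From Coquelicot Require Import Coquelicot.
Open Scope R_scope.
Lemma trD_eq E0 omega c phi0 psi chi sigma u : 0 < c -> 0 < E0 -> 0 < omega -> sigma = 1 \/ sigma = -1 ->
  trD E0 omega c phi0 psi chi sigma u = 1 - cos (2*chi) * cos (2 * theta omega c phi0 u).
Proof.
intros hc hE ho hs.
unfold trD.
set (t := theta omega c phi0 u).
assert (Hx : Derive (a_x E0 omega c phi0 psi chi sigma) u =
  sqrt 2 * E0 / omega * (omega / c) * (- cos chi * sin t * cos psi - sigma * sin chi * cos t * sin psi)).
{ apply is_derive_unique. unfold a_x, t, theta. auto_derive; auto. field. lra. }
assert (Hy : Derive (a_y E0 omega c phi0 psi chi sigma) u =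
  sqrt 2 * E0 / omega * (omega / c) * (- cos chi * sin t * sin psi + sigma * sin chi * cos t * cos psi)).
{ apply is_derive_unique. unfold a_y, t, theta. auto_derive; auto. field. lra. }
rewrite Hx, Hy. rewrite !cos_2a.
assert (s2 : sqrt 2 * sqrt 2 = 2) by (apply sqrt_sqrt; lra).
assert (ss : sigma * sigma = 1) by (destruct hs; subst; lra).
pose proof (sin2_cos2 chi). pose proof (sin2_cos2 t). pose proof (sin2_cos2 psi).
unfold Rsqr in *.
replace ((c / E0) ^ 2 * ((sqrt 2 * E0 / omega * (omega / c) * (- cos chi * sin t * cos psi - sigma * sin chi * cos t * sin psi)) ^ 2 +
   (sqrt 2 * E0 / omega * (omega / c) * (- cos chi * sin t * sin psi + sigma * sin chi * cos t * cos psi)) ^ 2))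
 with ((sqrt 2 * sqrt 2) * ((cos chi * sin t)^2 * (sin psi * sin psi + cos psi * cos psi) + (sigma*sigma) * (sin chi * cos t)^2 * (sin psi * sin psi + cos psi * cos psi))) by (field; lra).
rewrite s2, ss, H1.
replace ((cos chi * sin t)^2) with (cos chi*cos chi*(sin t*sin t)) by ring.
replace ((sin chi * cos t)^2) with (sin chi*sin chi*(cos t*cos t)) by ring.
replace (sin chi * sin chi) with (1 - cos chi * cos chi) by lra.
replace (sin t * sin t) with (1 - cos t * cos t) by lra.
ring.
Qed.
Lemma int_trD E0 omega c phi0 psi chi sigma u0 : 0 < c -> 0 < E0 -> 0 < omega -> sigma = 1 \/ sigma = -1 ->
  is_RInt (fun u => trD E0 omega c phi0 psi chi sigma u) u0 (u0 + 2 * PI * c / omega) (2 * PI * c / omega).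
Proof.
intros hc hE ho hs.
apply is_RInt_ext with (f := fun u => 1 - cos (2*chi) * cos (2 * theta omega c phi0 u)).
{ intros; rewrite trD_eq; auto. }
set (F := fun u => u - cos (2*chi) * (c / (2*omega)) * sin (2 * theta omega c phi0 u)).
replace (2 * PI * c / omega) with (minus (F (u0 + 2 * PI * c / omega)) (F u0)) at 2.
2:{ unfold F, minus, plus, opp; simpl.
  replace (2 * theta omega c phi0 (u0 + 2 * PI * c / omega)) with (2 * theta omega c phi0 u0 + 2 * INR 2 * PI).
  rewrite sin_period. ring.
  unfold theta. simpl. field. lra. }
apply (is_RInt_derive F (fun u => 1 - cos (2*chi) * cos (2 * theta omega c phi0 u))).
- intros x _. unfold F, theta. auto_derive; auto. field. lra.
- intros x _. apply continuity_pt_filterlim. apply derivable_continuous_pt. apply ex_derive_Reals_0. unfold theta. auto_derive. auto.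
Qed.

Definition coord (i : tidx) (x y : R) := match i with Ix => x | Iy => y end.

Lemma dT_quad i (a : R -> R) (e : R -> R -> R -> R) u x y : exdT i e u x y ->
  dT i (fun u x y => a u * (x^2+y^2) + e u x y) u x y = a u * 2 * coord i x y + dT i e u x y.
Proof.
destruct i; simpl; intro H.
- rewrite (Derive_plus (fun x' => a u * (x'^2+y^2)) (fun x' => e u x' y)); [f_equal; apply is_derive_unique; auto_derive; auto; try ring | auto_derive; auto | auto].
- rewrite (Derive_plus (fun y' => a u * (x^2+y'^2)) (fun y' => e u x y')); [f_equal; apply is_derive_unique; auto_derive; auto; try ring | auto_derive; auto | auto].
Qed.

Lemma dT_lin i j (a : R -> R) (e : R -> R -> R -> R) u x y : exdT i e u x y ->
  dT i (fun u x y => a u * 2 * coord j x y + e u x y) u x y = a u * 2 * kdelta i j + dT i e u x y.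
Proof.
destruct i, j; simpl; intro H.
- rewrite (Derive_plus (fun x' => a u * 2 * x') (fun x' => e u x' y)); [f_equal; apply is_derive_unique; auto_derive; auto; try ring | auto_derive; auto | auto].
- rewrite (Derive_plus (fun x' => a u * 2 * y) (fun x' => e u x' y)); [f_equal; apply is_derive_unique; auto_derive; auto; try ring | auto_derive; auto | auto].
- rewrite (Derive_plus (fun y' => a u * 2 * x) (fun y' => e u x y')); [f_equal; apply is_derive_unique; auto_derive; auto; try ring | auto_derive; auto | auto].
- rewrite (Derive_plus (fun y' => a u * 2 * y') (fun y' => e u x y')); [f_equal; apply is_derive_unique; auto_derive; auto; try ring | auto_derive; auto | auto].
Qed.

Lemma Rminus_eq' (a b : R) : minus a b = a - b. Proof. reflexivity. Qed.
Lemma Rplus_eq' (a b : R) : plus a b = a + b. Proof. reflexivity. Qed.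
Lemma Rscal_eq (a b : R) : scal a b = a * b. Proof. reflexivity. Qed.

Theorem proposition1
  (G c mu0 E0 omega phi0 psi chi sigma : R)
  (hG : 0 < G) (hc : 0 < c) (hmu0 : 0 < mu0) (hE0 : 0 < E0) (homega : 0 < omega)
  (hchi : - (PI / 4) <= chi <= PI / 4) (hsigma : sigma = 1 \/ sigma = -1)
  (h : R -> R -> R -> R -> R)  (* h gamma u x y *)
  (hdecomp : exists e : R -> R -> R -> R -> R,
      hess_O_gamma2 e /\
      forall gam u x y,
        h gam u x y =
          - Ccal G E0 c mu0 * trD E0 omega c phi0 psi chi sigma u * (x ^ 2 + y ^ 2)
          + e gam u x y)
  (hint : forall gam i j x y u0,
      ex_RInt (fun u => Riem (h gam) i j u x y) u0 (u0 + 2 * PI * c / omega)) :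
  forall (i j : tidx) (x y : R),
    exists K gam0, 0 < gam0 /\
      forall gam, 0 < Rabs gam < gam0 -> forall u0 : R,
        Rabs (cyc_avg (2 * PI * c / omega) u0 (fun u => Riem (h gam) i j u x y)
              - Ccal G E0 c mu0 * kdelta i j) <= K * gam ^ 2.
Proof.
intros i j x y.
destruct hdecomp as [e [[Hex Hb] Hh]].
destruct (Hb x y) as [K [g0 [Hg0 HK]]].
exists (K/2), g0. split; auto. intros gam Hgam u0.
assert (HT : 0 < 2 * PI * c / omega) by (pose proof PI_RGT_0; apply Rdiv_lt_0_compat; nra).
set (T := 2 * PI * c / omega) in *.
set (a := fun u => - Ccal G E0 c mu0 * trD E0 omega c phi0 psi chi sigma u).
assert (Hhf : h gam = fun u x y => a u * (x^2+y^2) + e gam u x y).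
{ extensionality u'; extensionality x'; extensionality y'. rewrite Hh. reflexivity. }
assert (E1 : dT j (fun u x y => a u * (x^2+y^2) + e gam u x y) = fun u x y => a u * 2 * coord j x y + dT j (e gam) u x y).
{ extensionality u'; extensionality x'; extensionality y'. apply dT_quad. apply (Hex gam j j u' x' y'). }
set (g := fun u => -/2 * dT i (dT j (e gam)) u x y).
set (tr := fun u => trD E0 omega c phi0 psi chi sigma u).
assert (HR : forall u, Riem (h gam) i j u x y = Ccal G E0 c mu0 * kdelta i j * tr u + g u).
{ intro u. unfold Riem. rewrite Hhf, E1, dT_lin by apply (Hex gam i j u x y). unfold a, g, tr; cbv beta. field. }
assert (Htr : is_RInt tr u0 (u0 + T) T) by (apply int_trD; auto).
assert (HR1 : forall u, Riem (h gam) i j u x y - Ccal G E0 c mu0 * kdelta i j * tr u = g u) by (intro u; rewrite HR; ring).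
assert (HR2 : forall u, Ccal G E0 c mu0 * kdelta i j * tr u + g u = Riem (h gam) i j u x y) by (intro u; rewrite HR; ring).
assert (Hg : ex_RInt g u0 (u0 + T)).
{ pose proof (ex_RInt_minus (V:=R_NormedModule) _ _ _ _ (hint gam i j x y u0) (ex_RInt_scal (V:=R_NormedModule) _ _ _ (Ccal G E0 c mu0 * kdelta i j) (ex_intro _ T Htr))) as H.
  apply ex_RInt_ext with (f := fun u => Riem (h gam) i j u x y - Ccal G E0 c mu0 * kdelta i j * tr u).
  - intros u _. exact (HR1 u).
  - exact H. }
assert (HI : RInt (fun u => Riem (h gam) i j u x y) u0 (u0 + T) = Ccal G E0 c mu0 * kdelta i j * T + RInt g u0 (u0 + T)).
{ pose proof (is_RInt_plus (V:=R_NormedModule) _ _ _ _ _ _ (is_RInt_scal (V:=R_NormedModule) _ _ _ (Ccal G E0 c mu0 * kdelta i j) _ Htr) (RInt_correct (V:=R_CompleteNormedModule) _ _ _ Hg)) as H2.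
  apply is_RInt_unique.
  apply is_RInt_ext with (f := fun u => Ccal G E0 c mu0 * kdelta i j * tr u + g u).
  - intros u _. exact (HR2 u).
  - exact H2. }
unfold cyc_avg. rewrite HI.
replace (/ T * (Ccal G E0 c mu0 * kdelta i j * T + RInt g u0 (u0 + T)) - Ccal G E0 c mu0 * kdelta i j)
  with (/ T * RInt g u0 (u0 + T)) by (field; lra).
rewrite Rabs_mult, Rabs_inv, (Rabs_right T) by lra.
assert (B : Rabs (RInt g u0 (u0 + T)) <= (u0 + T - u0) * (K / 2 * gam ^ 2)).
{ apply abs_RInt_le_const; auto. lra. intros t _. unfold g.
  rewrite Rabs_mult. pose proof (HK gam Hgam i j t).
  replace (Rabs (-/2)) with (/2). lra. rewrite Rabs_Ropp, Rabs_right; lra. }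
replace (u0 + T - u0) with T in B by ring.
apply Rmult_le_reg_l with T; auto.
replace (T * (/ T * Rabs (RInt g u0 (u0 + T)))) with (Rabs (RInt g u0 (u0 + T))) by (field; lra).
exact B.
Qed.
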